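(* Let $\theta\in\mathbb{R}/\mathbb{Z}$, $\theta\neq0$, and let $\mathbb{L}_{\mathcal{R}(\theta)}$ be the prime renormalization of the rotation $\mathbb{L}_\theta$. Then \[ \mathcal{R}(\theta)=\begin{cases}\dfrac{\theta}{1-\theta}&\text{if }0\le\theta\le\frac12,\\[1ex] \dfrac{2\theta-1}{\theta}&\text{if }\frac12\le\theta\le1.\end{cases} \] Moreover, writing $\theta=[0;a_1,a_2,\dots]=1-[0;b_1,b_2,\dots]$ with all $a_i,b_i$ positive integers, we have \[ \mathcal{R}([0;a_1,a_2,\dots])=\begin{cases}[0;a_1-1,a_2,\dots]&\text{if }a_1>1,\\ 1-[0;a_2,a_3,\dots]&\text{if }a_1=1,\end{cases} \] and \[ \mathcal{R}(1-[0;b_1,b_2,\dots])=\begin{cases}1-[0;b_1-1,b_2,\dots]&\text{if }b_1>1,\\ [0;b_2,b_3,\dots]&\text{if }b_1=1.\end{cases} \]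
   Context: For $\theta\in\mathbb{R}/\mathbb{Z}$ let $\mathbb{L}_\theta:\overline{\mathbb{D}}\to\overline{\mathbb{D}}$, $z\mapsto e^{2\pi i\theta}z$, be the rotation of the closed unit disk. Assume $\theta\neq0$ and let $\mathbb{I}$ be a closed internal ray of $\overline{\mathbb{D}}$. A fundamental sector $\mathbb{Y}$ of $\mathbb{L}_\theta$ is the smallest closed sector of $\overline{\mathbb{D}}$ bounded by $\mathbb{I}$ and $\mathbb{L}_\theta(\mathbb{I})$ (if $\theta=1/2$ either sector may be taken); its angle $\omega$ at the vertex $0$ (measured in full turns) is $\theta$ if $\theta\in[0,1/2]$ and $1-\theta$ otherwise. Rotate so that $1\in\overline{\mathbb{D}}\setminus\mathbb{Y}$. Set $\mathbb{Y}_-=\mathbb{L}_\theta^{-1}(\mathbb{Y})$ and $\mathbb{Y}_+=\overline{\mathbb{D}\setminus(\mathbb{Y}\cup\mathbb{Y}_-)}$. Then $(\mathbb{L}_\theta|_{\mathbb{Y}_+},\mathbb{L}^2_\theta|_{\mathbb{Y}_-})$ is the first return map of $\mathbb{Y}_-\cup\mathbb{Y}_+$ to itself. The prime renormalization of $\mathbb{L}_\theta$ is the rotation $\mathbb{L}_{\mathcal{R}(\theta)}$ of $\overline{\mathbb{D}}$ obtained from this pair by the gluing map $\psi:\mathbb{Y}_-\cup\mathbb{Y}_+\to\overline{\mathbb{D}}$, $z\mapsto z^{1/(1-\omega)}$ (argument measured from a boundary ray of the sector $\mathbb{Y}_-\cup\mathbb{Y}_+$), which identifies the two boundary rays of this sector.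 *)

(* Defs.v *)
From Stdlib Require Import Reals Lra List ClassicalEpsilon.
Open Scope R_scope.

(* Points of the closed unit disk are described in polar form; the rotations
   and the gluing map act on the argument only (the radius is preserved by
   rotations and transformed by r |-> r^(1/(1-omega)) by psi, which commutes
   with everything), so everything is expressed through the argument, an
   angle in R/Z measured in full turns and represented by real lifts. *)

Definition eqmod1 (x y : R) : Prop := exists k : Z, x - y = IZR k.

(* the closed sector (arc of arguments) starting at angle a, of width w,
   measured counterclockwise; as a 1-periodic set of real lifts *)
Definition arc (a w : R) (t : R) : Prop :=
  exists k : Z, a <= t + IZR k <= a + w.

(* Y is a fundamental sector of L_theta built from the internal ray of
   argument alpha: the smallest of the two closed sectors bounded by the rays
   of arguments alpha and alpha+theta (either one if they have equal size). *)
Definition fund_sector (theta alpha : R) (Y : R -> Prop) : Prop :=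
  ((forall t, Y t <-> arc alpha theta t) /\ theta <= 1 - theta) \/
  ((forall t, Y t <-> arc (alpha + theta) (1 - theta) t) /\ 1 - theta <= theta).

(* angle of the fundamental sector at the vertex 0 *)
Definition omega (theta : R) : R :=
  if Rle_dec theta (1/2) then theta else 1 - theta.

Definition Yminus (theta : R) (Y : R -> Prop) : R -> Prop :=
  fun t => Y (t + theta).

Definition Yplus (theta : R) (Y : R -> Prop) : R -> Prop :=
  adherence (fun t => ~ Y t /\ ~ Yminus theta Y t).

(* [renorm_rot theta rho]: for every admissible choice of fundamental sector Y
   (with 1 not in Y), writing the sector Y_- u Y_+ as the arc starting at the
   boundary ray of argument beta, of width 1-omega, the gluing map psi
   (argument beta+s |-> s/(1-omega), s in [0,1-omega]) conjugates the first
   return map (L_theta on Y_+, L_theta^2 on Y_-) to the rotation by rho. *)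
Definition renorm_rot (theta rho : R) : Prop :=
  forall (alpha : R) (Y : R -> Prop) (beta : R),
    fund_sector theta alpha Y ->
    ~ Y 0 ->
    (forall t, (Yminus theta Y t \/ Yplus theta Y t) <-> arc beta (1 - omega theta) t) ->
    forall s, 0 <= s <= 1 - omega theta ->
      (Yplus theta Y (beta + s) ->
         exists s', 0 <= s' <= 1 - omega theta /\
           eqmod1 (beta + s + theta) (beta + s') /\
           eqmod1 (s' / (1 - omega theta)) (s / (1 - omega theta) + rho)) /\
      (Yminus theta Y (beta + s) ->
         exists s', 0 <= s' <= 1 - omega theta /\
           eqmod1 (beta + s + 2 * theta) (beta + s') /\
           eqmod1 (s' / (1 - omega theta)) (s / (1 - omega theta) + rho)).

Definition prime_renorm (theta : R) : R :=
  epsilon (inhabits 0) (fun rho => 0 <= rho < 1 /\ renorm_rot theta rho).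

Definition cf_fin (l : list nat) : R :=
  fold_right (fun a x => / (INR a + x)) 0 l.

(* x = [0; a_0, a_1, ...] (infinite continued fraction, indices from 0) *)
Definition is_cf (a : nat -> nat) (x : R) : Prop :=
  Un_cv (fun n => cf_fin (map a (seq 0 n))) x.

(* Main.v *)
Require Import Defs.
From Stdlib Require Import Reals List Lra Lia ClassicalEpsilon Classical.
Open Scope R_scope.

Lemma eqm_refl x : eqmod1 x x.
Proof. exists 0%Z. simpl; ring. Qed.
Lemma eqm_sym x y : eqmod1 x y -> eqmod1 y x.
Proof. intros [k H]; exists (-k)%Z; rewrite opp_IZR; lra. Qed.
Lemma eqm_trans x y z : eqmod1 x y -> eqmod1 y z -> eqmod1 x z.
Proof. intros [k H] [m H']; exists (k+m)%Z; rewrite plus_IZR; lra. Qed.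
Lemma eqm_int x y (k:Z) : x - y = IZR k -> eqmod1 x y.
Proof. intros; exists k; auto. Qed.

Lemma int_0 (k:Z) : -1 < IZR k -> IZR k < 1 -> k = 0%Z.
Proof. intros H1 H2. apply lt_IZR in H1. apply lt_IZR in H2. lia. Qed.
Lemma int_1 (k:Z) : 0 < IZR k -> IZR k < 2 -> k = 1%Z.
Proof. intros H1 H2. apply lt_IZR in H1. apply lt_IZR in H2. lia. Qed.

Lemma arc_shift_base a w t (n:Z) : arc (a + IZR n) w t <-> arc a w t.
Proof. split; intros [k H].
  - exists (k - n)%Z. rewrite minus_IZR. lra.
  - exists (k + n)%Z. rewrite plus_IZR. lra. Qed.
Lemma arc_shift_pt a w t c : arc a w (t + c) <-> arc (a - c) w t.
Proof. split; intros [k H]; exists k; lra. Qed.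
Lemma arc_ext a b w t : a = b -> arc a w t -> arc b w t.
Proof. intros ->; auto. Qed.

Lemma notin_arc a w x : w < x - a < 1 -> ~ arc a w x.
Proof. intros H [k Hk].
  assert (H1 : -1 < IZR k) by lra. assert (H2: IZR k < 0) by lra.
  apply lt_IZR in H1; apply lt_IZR in H2. lia. Qed.

Lemma in_arc a w x : a <= x <= a + w -> arc a w x.
Proof. intros; exists 0%Z; simpl; lra. Qed.

Lemma arc_union a w1 w2 t : 0 <= w1 -> 0 <= w2 ->
  (arc a w1 t \/ arc (a + w1) w2 t) <-> arc a (w1 + w2) t.
Proof. intros H0 H1. split.
  - intros [[k H]|[k H]]; exists k; lra.
  - intros [k H]. destruct (Rle_dec (t + IZR k) (a + w1)).
    + left; exists k; lra.
    + right; exists k; lra. Qed.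

Lemma normalize x a : exists k:Z, a < x + IZR k <= a + 1.
Proof. destruct (archimed (a - x)) as [H1 H2]. exists (up (a - x)). lra. Qed.

Lemma arc_eq_base b c w : 0 <= w < 1 -> (forall t, arc b w t <-> arc c w t) -> eqmod1 b c.
Proof. intros Hw H.
  assert (Hb : arc c w b) by (apply H; apply in_arc; lra).
  destruct Hb as [k Hk]. set (d := b + IZR k - c).
  destruct (Req_dec d 0) as [D0|D0].
  { exists (-k)%Z. rewrite opp_IZR. unfold d in D0. lra. }
  assert (Hc : arc b w c) by (apply H; apply in_arc; lra).
  destruct Hc as [m Hm].
  assert (Hm1 : (m + k)%Z = 1%Z).
  { apply int_1; rewrite plus_IZR; unfold d in *; lra. }
  assert (Hmk : IZR m + IZR k = 1) by (rewrite <- plus_IZR, Hm1; reflexivity).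
  assert (Hp : arc b w (c + (1 + w)/2)).
  { exists (-k)%Z. rewrite opp_IZR. unfold d in *. lra. }
  apply H in Hp. exfalso; apply (notin_arc c w (c + (1+w)/2)); auto. lra. Qed.

Lemma arc_shift_int a w x (n:Z) : arc a w (x + IZR n) <-> arc a w x.
Proof. split; intros [k H].
  - exists (k + n)%Z. rewrite plus_IZR. lra.
  - exists (k - n)%Z. rewrite minus_IZR. lra. Qed.

Lemma adh_empty (P : R -> Prop) t : (forall t, ~ P t) -> ~ adherence P t.
Proof. intros H A.
  destruct (A (disc t (mkposreal 1 Rlt_0_1))) as [y [_ Hy]].
  - exists (mkposreal 1 Rlt_0_1). intros z Hz; exact Hz.
  - eapply H; eauto. Qed.

Lemma adh_gap p q (P : R -> Prop) : 0 < q < 1 -> (forall t, P t <-> ~ arc p q t) ->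
  forall t, adherence P t <-> arc (p + q) (1 - q) t.
Proof. intros Hq HP t. split.
  - intros A. apply NNPP. intros N.
    destruct (normalize t p) as [k Hk].
    set (u := t + IZR k - p).
    assert (Hu : u < q).
    { apply Rnot_le_lt. intros Hu. apply N. exists k. unfold u in *. lra. }
    assert (Hd : 0 < Rmin u (q - u)).
    { apply Rmin_pos; unfold u in *; lra. }
    destruct (A (disc t (mkposreal _ Hd))) as [y [Hy1 Hy2]].
    + exists (mkposreal _ Hd). intros z Hz; exact Hz.
    + apply HP in Hy2. apply Hy2. unfold disc in Hy1; simpl in Hy1.
      pose proof (Rmin_l u (q-u)). pose proof (Rmin_r u (q-u)).
      apply Rabs_def2 in Hy1. exists k. unfold u in *. lra.
  - intros [k Hk] V [d Hd].
    set (u := t + IZR k - p).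
    set (l := Rmin (1/2) (d/2)).
    assert (Hl1 : 0 < l) by (apply Rmin_pos; pose proof (cond_pos d); lra).
    assert (Hl2 : l <= 1/2) by apply Rmin_l.
    assert (Hl3 : l <= d/2) by apply Rmin_r.
    set (y := t + l * ((1+q)/2 - u)).
    exists y. split.
    + apply Hd. unfold disc. unfold y.
      replace (t + l * ((1 + q) / 2 - u) - t) with (l * ((1 + q) / 2 - u)) by ring.
      rewrite Rabs_mult. rewrite (Rabs_pos_eq l) by lra.
      assert (Rabs ((1 + q) / 2 - u) <= 1) by (apply Rabs_le; unfold u in *; lra).
      pose proof (cond_pos d).
      assert (l * Rabs ((1 + q) / 2 - u) <= l * 1) by (apply Rmult_le_compat_l; lra).
      lra.
    + apply HP. rewrite <- (arc_shift_int p q y k). apply notin_arc.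
      assert (E : y + IZR k - p = (1 - l) * u + l * ((1+q)/2)) by (unfold y, u; ring).
      rewrite E.
      assert (0 <= (1 - l) * (u - q)) by (apply Rmult_le_pos; unfold u in *; lra).
      assert (0 <= (1 - l) * (1 - u)) by (apply Rmult_le_pos; unfold u in *; lra).
      assert (0 < l * ((1 - q)/2)) by (apply Rmult_lt_0_compat; lra).
      split; nra.
Qed.

Lemma omega_le th : th <= 1/2 -> omega th = th.
Proof. intros; unfold omega; destruct (Rle_dec th (1/2)); lra. Qed.
Lemma omega_ge th : 1/2 <= th -> omega th = 1 - th.
Proof. intros; unfold omega; destruct (Rle_dec th (1/2)); lra. Qed.

Lemma eqm_add_l x a b : eqmod1 a b -> eqmod1 (x + a) (x + b).
Proof. intros [k H]; exists k; lra. Qed.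

Lemma arc_rel beta c a w s : eqmod1 beta c -> arc (c + a) w (beta + s) ->
  exists m:Z, a <= s + IZR m <= a + w.
Proof. intros [n Hn] [k Hk]. exists (n + k)%Z. rewrite plus_IZR. lra. Qed.

Lemma total_arc p t : arc p 1 t.
Proof. destruct (normalize t p) as [k Hk]. exists k. lra. Qed.

Section Opt1.
Variables (th alpha beta rho : R) (Y : R -> Prop).
Hypothesis Hth : 0 < th <= 1/2.
Hypothesis HY : forall t, Y t <-> arc alpha th t.

Lemma o1_Ym t : Yminus th Y t <-> arc (alpha + th + (1 - 2*th)) th t.
Proof. unfold Yminus. rewrite HY, arc_shift_pt.
  replace (alpha + th + (1 - 2*th)) with ((alpha - th) + IZR 1) by (simpl; ring).
  rewrite arc_shift_base. tauto. Qed.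

Lemma o1_P t : (~ Y t /\ ~ Yminus th Y t) <-> ~ arc (alpha - th) (2*th) t.
Proof. unfold Yminus. rewrite !HY, arc_shift_pt.
  replace (2*th) with (th + th) by ring. rewrite <- arc_union by lra.
  replace (alpha - th + th) with alpha by ring. tauto. Qed.

Lemma o1_Yp_lt t : th < 1/2 -> Yplus th Y t <-> arc (alpha + th) (1 - 2*th) t.
Proof. intros H. unfold Yplus.
  rewrite (adh_gap (alpha - th) (2*th)); [ | lra | apply o1_P].
  split; apply arc_ext; ring. Qed.

Lemma o1_Yp_eq t : th = 1/2 -> ~ Yplus th Y t.
Proof. intros H. unfold Yplus. apply adh_empty. intros u Hu.
  apply o1_P in Hu. apply Hu. replace (2*th) with 1 by lra. apply total_arc. Qed.

Lemma o1_U t : (Yminus th Y t \/ Yplus th Y t) <-> arc (alpha + th) (1 - th) t.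
Proof. destruct (Req_dec th (1/2)) as [E|E].
  - rewrite o1_Ym. split.
    + intros [H|H]. * replace (1 - th) with th by lra.
        eapply arc_ext; [|exact H]. lra.
      * exfalso; eapply o1_Yp_eq; eauto.
    + intros H; left. replace (1 - th) with th in H by lra.
      eapply arc_ext; [|exact H]. lra.
  - rewrite o1_Ym, o1_Yp_lt by lra.
    replace (1 - th) with ((1 - 2*th) + th) by ring.
    rewrite <- arc_union by lra. tauto. Qed.

Hypothesis HU : forall t, (Yminus th Y t \/ Yplus th Y t) <-> arc beta (1 - th) t.
Hypothesis Hrho : eqmod1 rho (th / (1 - th)).

Lemma o1_beta : eqmod1 beta (alpha + th).
Proof. apply (arc_eq_base _ _ (1 - th)); [lra|]. intros t. rewrite <- HU, o1_U. tauto. Qed.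

Lemma o1_concl s : 0 <= s <= 1 - th ->
      (Yplus th Y (beta + s) ->
         exists s', 0 <= s' <= 1 - th /\
           eqmod1 (beta + s + th) (beta + s') /\
           eqmod1 (s' / (1 - th)) (s / (1 - th) + rho)) /\
      (Yminus th Y (beta + s) ->
         exists s', 0 <= s' <= 1 - th /\
           eqmod1 (beta + s + 2 * th) (beta + s') /\
           eqmod1 (s' / (1 - th)) (s / (1 - th) + rho)).
Proof. intros Hs. pose proof o1_beta as Hb. split.
  - intros H. destruct (Req_dec th (1/2)) as [E|E].
    { exfalso; eapply o1_Yp_eq; eauto. }
    apply o1_Yp_lt in H; [|lra].
    replace (alpha + th) with (alpha + th + 0) in H by ring.
    destruct (arc_rel _ _ _ _ _ Hb H) as [m Hm].
    assert (m = 0%Z) by (apply int_0; lra). subst m. simpl in Hm.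
    exists (s + th). split; [lra|]. split.
    + replace (beta + s + th) with (beta + (s + th)) by ring. apply eqm_refl.
    + apply (eqm_trans _ (s / (1 - th) + th / (1 - th))).
      * apply eqm_int with 0%Z. simpl. field. lra.
      * apply eqm_add_l, eqm_sym, Hrho.
  - intros H. apply o1_Ym in H.
    destruct (arc_rel _ _ _ _ _ Hb H) as [m Hm].
    assert (m = 0%Z) by (apply int_0; lra). subst m. simpl in Hm.
    exists (s + 2*th - 1). split; [lra|]. split.
    + apply eqm_int with 1%Z. simpl. ring.
    + apply (eqm_trans _ (s / (1 - th) + th / (1 - th))).
      * apply eqm_int with (-1)%Z. simpl. field. lra.
      * apply eqm_add_l, eqm_sym, Hrho.
Qed.
End Opt1.

Section Opt2.
Variables (th alpha beta rho : R) (Y : R -> Prop).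
Hypothesis Hth : 1/2 <= th < 1.
Hypothesis HY : forall t, Y t <-> arc (alpha + th) (1 - th) t.

Lemma o2_Ym t : Yminus th Y t <-> arc (alpha + 0) (1 - th) t.
Proof. unfold Yminus. rewrite HY, arc_shift_pt. split; apply arc_ext; ring. Qed.

Lemma o2_P t : (~ Y t /\ ~ Yminus th Y t) <-> ~ arc (alpha + th) (2 - 2*th) t.
Proof. unfold Yminus. rewrite !HY, arc_shift_pt.
  replace (2 - 2*th) with ((1 - th) + (1 - th)) by ring. rewrite <- arc_union by lra.
  replace (alpha + th - th) with ((alpha + th + (1 - th)) + IZR (-1)) by (simpl; ring).
  rewrite arc_shift_base. tauto. Qed.

Lemma o2_Yp_lt t : 1/2 < th -> Yplus th Y t <-> arc (alpha + 0 + (1 - th)) (2*th - 1) t.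
Proof. intros H. unfold Yplus.
  rewrite (adh_gap (alpha + th) (2 - 2*th)); [ | lra | apply o2_P].
  replace (alpha + th + (2 - 2 * th)) with ((alpha + 0 + (1 - th)) + IZR 1) by (simpl; ring).
  rewrite arc_shift_base. replace (1 - (2 - 2 * th)) with (2*th - 1) by ring. tauto. Qed.

Lemma o2_Yp_eq t : th = 1/2 -> ~ Yplus th Y t.
Proof. intros H. unfold Yplus. apply adh_empty. intros u Hu.
  apply o2_P in Hu. apply Hu. replace (2 - 2*th) with 1 by lra. apply total_arc. Qed.

Lemma o2_U t : (Yminus th Y t \/ Yplus th Y t) <-> arc alpha th t.
Proof. destruct (Req_dec th (1/2)) as [E|E].
  - rewrite o2_Ym. split.
    + intros [H|H]. * replace th with (1 - th) by lra.
        eapply arc_ext; [|exact H]. lra.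
      * exfalso; eapply o2_Yp_eq; eauto.
    + intros H; left. replace th with (1 - th) in H by lra.
      eapply arc_ext; [|exact H]. lra.
  - rewrite o2_Ym, o2_Yp_lt by lra.
    rewrite arc_union by lra. replace (1 - th + (2 * th - 1)) with th by ring.
    split; apply arc_ext; ring. Qed.

Hypothesis HU : forall t, (Yminus th Y t \/ Yplus th Y t) <-> arc beta th t.
Hypothesis Hrho : eqmod1 rho ((2 * th - 1) / th).

Lemma o2_beta : eqmod1 beta (alpha + 0).
Proof. apply (arc_eq_base _ _ th); [lra|]. intros t. rewrite <- HU, o2_U.
  split; apply arc_ext; ring. Qed.

Lemma o2_concl s : 0 <= s <= th ->
      (Yplus th Y (beta + s) ->
         exists s', 0 <= s' <= th /\
           eqmod1 (beta + s + th) (beta + s') /\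
           eqmod1 (s' / th) (s / th + rho)) /\
      (Yminus th Y (beta + s) ->
         exists s', 0 <= s' <= th /\
           eqmod1 (beta + s + 2 * th) (beta + s') /\
           eqmod1 (s' / th) (s / th + rho)).
Proof. intros Hs. pose proof o2_beta as Hb. split.
  - intros H. destruct (Req_dec th (1/2)) as [E|E].
    { exfalso; eapply o2_Yp_eq; eauto. }
    apply o2_Yp_lt in H; [|lra].
    replace (alpha + 0 + (1 - th)) with (alpha + (1 - th)) in H by ring.
    replace (alpha + 0) with alpha in Hb by ring.
    destruct (arc_rel _ _ _ _ _ Hb H) as [m Hm].
    assert (m = 0%Z) by (apply int_0; lra). subst m. simpl in Hm.
    exists (s + th - 1). split; [lra|]. split.
    + apply eqm_int with 1%Z. simpl. ring.
    + apply (eqm_trans _ (s / th + (2 * th - 1) / th)).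
      * apply eqm_int with (-1)%Z. simpl. field. lra.
      * apply eqm_add_l, eqm_sym, Hrho.
  - intros H. apply o2_Ym in H.
    replace (alpha + 0) with alpha in Hb, H by ring.
    replace alpha with (alpha + 0) in H at 1 by ring.
    destruct (arc_rel _ _ _ _ _ Hb H) as [m Hm].
    assert (m = 0%Z) by (apply int_0; lra). subst m. simpl in Hm.
    exists (s + 2*th - 1). split; [lra|]. split.
    + apply eqm_int with 1%Z. simpl. ring.
    + apply (eqm_trans _ (s / th + (2 * th - 1) / th)).
      * apply eqm_int with 0%Z. simpl. field. lra.
      * apply eqm_add_l, eqm_sym, Hrho.
Qed.
End Opt2.

Definition F (th : R) : R := if Rle_dec th (1/2) then th / (1 - th) else (2 * th - 1) / th.

Lemma F_le th : th <= 1/2 -> F th = th / (1 - th).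
Proof. intros; unfold F; destruct (Rle_dec th (1/2)); lra. Qed.
Lemma F_ge th : 1/2 < th -> F th = (2 * th - 1) / th.
Proof. intros; unfold F; destruct (Rle_dec th (1/2)); lra. Qed.
Lemma F_half : eqmod1 ((1/2) / (1 - 1/2)) ((2 * (1/2) - 1) / (1/2)).
Proof. apply eqm_int with 1%Z. simpl. field. Qed.

Lemma renorm_exist th rho : 0 < th < 1 -> eqmod1 rho (F th) -> renorm_rot th rho.
Proof. intros Hth Hr alpha Y beta fs nY0 hU s hs.
  destruct fs as [[HY Hle]|[HY Hge]].
  - rewrite omega_le in * by lra. rewrite F_le in Hr by lra.
    apply (o1_concl th alpha beta rho Y); auto; lra.
  - rewrite omega_ge in * by lra.
    replace (1 - (1 - th)) with th in * by ring.
    apply (o2_concl th alpha beta rho Y); auto; try lra.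
    destruct (Rle_dec th (1/2)).
    + assert (th = 1/2) by lra. subst th. rewrite F_le in Hr by lra.
      eapply eqm_trans; [exact Hr| apply F_half].
    + rewrite F_ge in Hr by lra. auto.
Qed.

Lemma renorm_unique th rho : 0 < th < 1 -> renorm_rot th rho -> eqmod1 rho (F th).
Proof. intros Hth R0. destruct (Rle_dec th (1/2)) as [Hle|Hgt].
  - rewrite F_le by lra.
    set (alpha := (1 - th)/2).
    set (Y := fun t => arc alpha th t).
    assert (HY : forall t, Y t <-> arc alpha th t) by (intros; unfold Y; tauto).
    assert (fs : fund_sector th alpha Y) by (left; split; [exact HY | lra]).
    assert (nY : ~ Y 0).
    { unfold Y. rewrite <- (arc_shift_int _ _ 0 1). apply notin_arc. simpl. unfold alpha; lra. }
    assert (hU : forall t, (Yminus th Y t \/ Yplus th Y t) <-> arc (alpha + th) (1 - omega th) t).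
    { intros t. rewrite omega_le by lra. apply o1_U; [lra | exact HY]. }
    assert (hs : 0 <= 1 - th <= 1 - omega th) by (rewrite omega_le; lra).
    destruct (R0 alpha Y (alpha + th) fs nY hU (1 - th) hs) as [_ HM].
    rewrite omega_le in HM by lra.
    assert (Hp : Yminus th Y (alpha + th + (1 - th))).
    { unfold Yminus. apply HY. exists (-1)%Z. simpl. lra. }
    destruct (HM Hp) as [s' [Hs' [[k Hk] Hm]]].
    assert (k = 1%Z) by (apply int_1; lra). subst k. simpl in Hk.
    assert (s' = th) by lra. subst s'.
    apply eqm_sym in Hm. destruct Hm as [m Hm].
    apply eqm_int with (m - 1)%Z. rewrite minus_IZR. simpl.
    replace ((1 - th) / (1 - th)) with 1 in Hm by (field; lra). lra.
  - rewrite F_ge by lra.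
    set (alpha := - th / 2).
    set (Y := fun t => arc (alpha + th) (1 - th) t).
    assert (HY : forall t, Y t <-> arc (alpha + th) (1 - th) t) by (intros; unfold Y; tauto).
    assert (fs : fund_sector th alpha Y) by (right; split; [exact HY | lra]).
    assert (nY : ~ Y 0).
    { unfold Y. rewrite <- (arc_shift_int _ _ 0 1). apply notin_arc. simpl. unfold alpha; lra. }
    assert (hU : forall t, (Yminus th Y t \/ Yplus th Y t) <-> arc alpha (1 - omega th) t).
    { intros t. rewrite omega_ge by lra. replace (1 - (1 - th)) with th by ring.
      apply o2_U; auto; lra. }
    assert (hs : 0 <= 0 <= 1 - omega th) by (rewrite omega_ge; lra).
    destruct (R0 alpha Y alpha fs nY hU 0 hs) as [_ HM].
    rewrite omega_ge in HM by lra. replace (1 - (1 - th)) with th in HM by ring.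
    assert (Hp : Yminus th Y (alpha + 0)).
    { unfold Yminus. apply HY. exists 0%Z. simpl. lra. }
    destruct (HM Hp) as [s' [Hs' [[k Hk] Hm]]].
    assert (k = 1%Z) by (apply int_1; lra). subst k. simpl in Hk.
    assert (s' = 2 * th - 1) by lra. subst s'.
    apply eqm_sym in Hm. destruct Hm as [m Hm].
    apply eqm_int with m.
    replace (0 / th) with 0 in Hm by (field; lra). lra.
Qed.

Lemma pr_spec th : 0 < th < 1 -> eqmod1 (prime_renorm th) (F th).
Proof. intros H. apply renorm_unique; auto.
  unfold prime_renorm. apply (epsilon_spec (inhabits 0) (fun rho => 0 <= rho < 1 /\ renorm_rot th rho)).
  destruct (archimed (F th)) as [H1 H2].
  exists (F th - IZR (up (F th)) + 1). split; [lra|].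
  apply renorm_exist; auto. apply eqm_int with (1 - up (F th))%Z.
  rewrite minus_IZR. simpl. ring. Qed.

Lemma inv_le1 x : 1 <= x -> 0 < / x <= 1.
Proof. intros. split; [apply Rinv_0_lt_compat; lra|].
  rewrite <- Rinv_1. apply Rinv_le_contravar; lra. Qed.

Lemma INR_pos1 n : (0 < n)%nat -> 1 <= INR n.
Proof. intros H. apply (le_INR 1 n) in H. simpl in H. exact H. Qed.

Lemma cf_bounds l : Forall (fun n => (0 < n)%nat) l -> 0 <= cf_fin l <= 1.
Proof. induction 1; simpl; [lra|].
  pose proof (INR_pos1 _ H). pose proof (inv_le1 (INR x + cf_fin l)). lra. Qed.

Lemma Forall_map_seq (a : nat -> nat) s n : (forall i, (0 < a i)%nat) ->
  Forall (fun n => (0 < n)%nat) (map a (seq s n)).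
Proof. intros H. apply Forall_forall. intros x Hx. apply in_map_iff in Hx.
  destruct Hx as [i [<- _]]. auto. Qed.

Lemma cf_step (f : nat -> nat) n :
  cf_fin (map f (seq 0 (S n))) = / (INR (f 0%nat) + cf_fin (map (fun i => f (S i)) (seq 0 n))).
Proof. simpl. rewrite <- seq_shift, map_map. reflexivity. Qed.

Lemma Un_cv_ext u v l : (forall n, u n = v n) -> Un_cv u l -> Un_cv v l.
Proof. intros E H eps He. destruct (H eps He) as [N HN]. exists N. intros n Hn.
  rewrite <- E. auto. Qed.

Lemma Un_cv_const c : Un_cv (fun _ => c) c.
Proof. intros eps He. exists 0%nat. intros. unfold R_dist. rewrite Rminus_diag, Rabs_R0. lra. Qed.

Lemma cf_tail (a : nat -> nat) u : (forall i, (0 < a i)%nat) -> is_cf a u -> 0 < u ->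
  is_cf (fun i => a (S i)) (/ u - INR (a 0%nat)) /\ 0 <= / u - INR (a 0%nat) <= 1.
Proof. intros Ha Hc Hu.
  set (T := fun n => cf_fin (map (fun i => a (S i)) (seq 0 n))).
  assert (TB : forall n, 0 <= T n <= 1).
  { intros n. apply cf_bounds. unfold T. apply (Forall_map_seq (fun i => a (S i))). auto. }
  assert (HT : forall n, T n = / cf_fin (map a (seq 0 (S n))) - INR (a 0%nat)).
  { intros n. rewrite cf_step. fold (T n). pose proof (INR_pos1 _ (Ha 0%nat)).
    pose proof (TB n). rewrite Rinv_inv. ring. }
  assert (Hs : Un_cv (fun n => cf_fin (map a (seq 0 (S n)))) u).
  { apply (Un_cv_ext (fun n => cf_fin (map a (seq 0 (n + 1))))).
    - intros n. rewrite Nat.add_1_r. reflexivity.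
    - exact (CV_shift' (fun n => cf_fin (map a (seq 0 n))) 1 u Hc). }
  assert (HL : Un_cv T (/ u - INR (a 0%nat))).
  { apply (Un_cv_ext (fun n => (fun x => / x - INR (a 0%nat)) (cf_fin (map a (seq 0 (S n)))))).
    - intros n. rewrite HT. reflexivity.
    - apply (continuity_seq (fun x => / x - INR (a 0%nat))); [| exact Hs].
      assert (u <> 0) by lra. reg. }
  split; [exact HL|]. split.
  - exact (@Rle_cv_lim (fun _ => 0) T 0 _ (fun n => proj1 (TB n)) (Un_cv_const 0) HL).
  - exact (@Rle_cv_lim T (fun _ => 1) _ 1 (fun n => proj2 (TB n)) HL (Un_cv_const 1)).
Qed.

Lemma cf_cons (f : nat -> nat) x : is_cf (fun i => f (S i)) x -> 0 < INR (f 0%nat) + x ->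
  is_cf f (/ (INR (f 0%nat) + x)).
Proof. intros Hc Hp. unfold is_cf.
  apply (CV_shift _ 1). apply (Un_cv_ext (fun n => (fun y => / (INR (f 0%nat) + y))
           (cf_fin (map (fun i => f (S i)) (seq 0 n))))).
  - intros n. rewrite Nat.add_1_r, cf_step. reflexivity.
  - apply (continuity_seq (fun y => / (INR (f 0%nat) + y))); [| exact Hc]. assert (INR (f 0%nat) + x <> 0) by lra. reg.
Qed.

Lemma pr_le t : 0 < t <= 1/2 -> eqmod1 (prime_renorm t) (t / (1 - t)).
Proof. intros H. rewrite <- F_le by lra. apply pr_spec. lra. Qed.
Lemma pr_ge t : 1/2 <= t < 1 -> eqmod1 (prime_renorm t) ((2 * t - 1) / t).
Proof. intros H. destruct (Req_dec t (1/2)) as [E|E].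
  - subst t. eapply eqm_trans; [apply pr_le; lra | apply F_half].
  - rewrite <- F_ge by lra. apply pr_spec. lra. Qed.

Lemma alg_big (a:nat) y t : (1 < a)%nat -> 0 <= y <= 1 -> t = / (INR a + y) ->
  0 < t <= 1/2 /\ t / (1 - t) = / (INR (a - 1) + y).
Proof. intros Ha Hy Ht.
  assert (H2 : 2 <= INR a) by (apply (le_INR 2 a) in Ha; simpl in Ha; lra).
  rewrite minus_INR by lia. simpl INR at 2.
  assert (0 < t) by (subst t; apply Rinv_0_lt_compat; lra).
  assert (t * (INR a + y) = 1) by (subst t; field; lra).
  split; [split; [lra| nra] |].
  assert (1 - t <> 0) by nra.
  field_simplify_eq; try lra; nra. Qed.

Lemma alg_one y t : 0 <= y <= 1 -> t = / (1 + y) -> t < 1 ->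
  1/2 <= t /\ (2 * t - 1) / t = 1 - y.
Proof. intros Hy Ht Ht1.
  assert (0 < t) by (subst t; apply Rinv_0_lt_compat; lra).
  assert (t * (1 + y) = 1) by (subst t; field; lra).
  split; [nra|]. field_simplify_eq; [nra | lra]. Qed.

Lemma inf_cf (a : nat -> nat) u : (forall i, (0 < a i)%nat) -> is_cf a u -> 0 < u < 1 ->
  ((1 < a 0%nat)%nat -> 0 < u <= 1/2 /\
     is_cf (fun i => match i with O => (a 0%nat - 1)%nat | _ => a i end) (u / (1 - u))) /\
  (a 0%nat = 1%nat -> 1/2 <= u /\ is_cf (fun i => a (S i)) (/ u - 1) /\
     (2 * u - 1) / u = 1 - (/ u - 1)).
Proof. intros Ha Hc Hu.
  destruct (cf_tail a u Ha Hc (proj1 Hu)) as [Htl Hb].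
  set (x := / u - INR (a 0%nat)) in *.
  assert (Ht : u = / (INR (a 0%nat) + x)).
  { unfold x. replace (INR (a 0%nat) + (/ u - INR (a 0%nat))) with (/ u) by ring.
    rewrite Rinv_inv. reflexivity. }
  split.
  - intros H1. destruct (alg_big (a 0%nat) x u H1 Hb Ht) as [Hle Heq].
    split; [exact Hle|]. rewrite Heq.
    apply (cf_cons (fun i => match i with O => (a 0%nat - 1)%nat | _ => a i end) x).
    + exact Htl.
    + simpl. assert (1 <= INR (a 0%nat - 1)) by (apply INR_pos1; lia). lra.
  - intros H1. assert (E : x = / u - 1) by (unfold x; rewrite H1; simpl; ring).
    rewrite E in Htl, Hb.
    assert (Ht' : u = / (1 + (/ u - 1))).
    { replace (1 + (/ u - 1)) with (/ u) by ring. rewrite Rinv_inv. reflexivity. }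
    destruct (alg_one (/ u - 1) u Hb Ht' (proj2 Hu)) as [Hge Heq].
    split; [exact Hge|]. split; [exact Htl| exact Heq].
Qed.

Theorem lemmaA1 (t : R) (ht : 0 < t < 1) :
  (t <= 1/2 -> eqmod1 (prime_renorm t) (t / (1 - t))) /\
  (1/2 <= t -> eqmod1 (prime_renorm t) ((2 * t - 1) / t)) /\
  (forall a : nat -> nat, (forall i, (0 < a i)%nat) -> is_cf a t ->
     ((1 < a 0%nat)%nat -> exists x,
        is_cf (fun i => match i with O => (a 0%nat - 1)%nat | _ => a i end) x /\
        eqmod1 (prime_renorm t) x) /\
     (a 0%nat = 1%nat -> exists x,
        is_cf (fun i => a (S i)) x /\ eqmod1 (prime_renorm t) (1 - x))) /\
  (forall b : nat -> nat, (forall i, (0 < b i)%nat) -> is_cf b (1 - t) ->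
     ((1 < b 0%nat)%nat -> exists x,
        is_cf (fun i => match i with O => (b 0%nat - 1)%nat | _ => b i end) x /\
        eqmod1 (prime_renorm t) (1 - x)) /\
     (b 0%nat = 1%nat -> exists x,
        is_cf (fun i => b (S i)) x /\ eqmod1 (prime_renorm t) x)) /\
  (forall (a1 : nat) (l : list nat), (0 < a1)%nat -> Forall (fun n => (0 < n)%nat) l ->
     t = cf_fin (a1 :: l) ->
     ((1 < a1)%nat -> eqmod1 (prime_renorm t) (cf_fin ((a1 - 1)%nat :: l))) /\
     (a1 = 1%nat -> eqmod1 (prime_renorm t) (1 - cf_fin l))) /\
  (forall (b1 : nat) (l : list nat), (0 < b1)%nat -> Forall (fun n => (0 < n)%nat) l ->
     t = 1 - cf_fin (b1 :: l) ->
     ((1 < b1)%nat -> eqmod1 (prime_renorm t) (1 - cf_fin ((b1 - 1)%nat :: l))) /\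
     (b1 = 1%nat -> eqmod1 (prime_renorm t) (cf_fin l))).
Proof.
  split; [intros; apply pr_le; lra|].
  split; [intros; apply pr_ge; lra|].
  split.
  { intros a Ha Hc. destruct (inf_cf a t Ha Hc ht) as [P1 P2]. split.
    - intros H1. destruct (P1 H1) as [Hle Hcf]. exists (t / (1 - t)). split; auto.
      apply pr_le; lra.
    - intros H1. destruct (P2 H1) as [Hge [Hcf Heq]]. exists (/ t - 1). split; auto.
      rewrite <- Heq. apply pr_ge; lra. }
  split.
  { intros b Hb Hc. destruct (inf_cf b (1 - t) Hb Hc ltac:(lra)) as [P1 P2]. split.
    - intros H1. destruct (P1 H1) as [Hle Hcf]. exists ((1 - t) / (1 - (1 - t))). split; auto.
      eapply eqm_trans; [apply pr_ge; lra|]. apply eqm_int with 0%Z. simpl. field. lra.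
    - intros H1. destruct (P2 H1) as [Hge [Hcf Heq]]. exists (/ (1 - t) - 1). split; auto.
      eapply eqm_trans; [apply pr_le; lra|]. apply eqm_int with 0%Z. simpl. field. lra. }
  split.
  { intros a1 l Ha1 Hl Ht. pose proof (cf_bounds l Hl) as Hy. simpl in Ht. split.
    - intros H1. destruct (alg_big a1 (cf_fin l) t H1 Hy Ht) as [Hle Heq].
      simpl. rewrite <- Heq. apply pr_le; lra.
    - intros H1. subst a1. simpl INR in Ht.
      destruct (alg_one (cf_fin l) t Hy Ht (proj2 ht)) as [Hge Heq].
      rewrite <- Heq. apply pr_ge; lra. }
  { intros b1 l Hb1 Hl Ht. pose proof (cf_bounds l Hl) as Hy. simpl in Ht.
    assert (Hu : 1 - t = / (INR b1 + cf_fin l)) by lra. split.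
    - intros H1. destruct (alg_big b1 (cf_fin l) (1 - t) H1 Hy Hu) as [Hle Heq].
      simpl. rewrite <- Heq. eapply eqm_trans; [apply pr_ge; lra|].
      apply eqm_int with 0%Z. simpl. field. lra.
    - intros H1. subst b1. simpl INR in Hu.
      destruct (alg_one (cf_fin l) (1 - t) Hy Hu ltac:(lra)) as [Hge Heq].
      eapply eqm_trans; [apply pr_le; lra|].
      apply eqm_int with 0%Z. simpl.
      assert (0 < 1 - t) by lra.
      assert (E : cf_fin l = / (1 - t) - 1).
      { rewrite Hu. rewrite Rinv_inv. ring. }
      rewrite E. field. lra. }
Qed.
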